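(* Let $R>0$, let $E\subset\mathbb{R}^d$ be a body, $a\in\partial\, co_R(E)$, and let $B=B(o,R)$ be an open ball of radius $R$ centered at the origin which $R$-supports $co_R(E)$ at $a$, i.e. $a\in\partial B$ and $B\cap co_R(E)=\emptyset$. Let $S=\partial B$, $\mathfrak F=E\cap S$, $F=\{\lambda x:\lambda\ge0,\ x\in\mathfrak F\}$ and $C=co(F)$. Assume that $C$ is pointed, i.e. $C\cap(-C)=\{o\}$, and that $a\notin C$. Then: (i) there exists $v\in S^{d-1}$ such that $\langle a,v\rangle>0$ and $\langle x,v\rangle<0$ for all $x\in\mathfrak F$; (ii) for this $v$, setting $B_t=\{x:|x-tv|<R\}$, for all sufficiently small $t>0$ one has $a\in B_t$ and $B_t\cap E=\emptyset$.
   Context: A body is a nonempty closed subset of $\mathbb{R}^d$; $o$ is the origin, $S^{d-1}$ the unit sphere, $co(\cdot)$ the convex hull. Fix $R>0$. The $R$-hulloid of a body $E$ is $co_R(E)=\bigcap\{\mathbb{R}^d\setminus B : B \text{ an open ball of radius } R,\ B\cap E=\emptyset\}$ (equal to $\mathbb{R}^d$ if no such ball exists). *)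

(* Defs.v *)
(* R^d is modelled as row vectors 'rV[R]_d over R : realType,
   with the Euclidean inner product and norm defined below; topology (closed, closure)
   is the library's matrix topology, which coincides with the Euclidean one. *)
From HB Require Import structures.
From mathcomp Require Import all_boot all_order all_algebra.
From mathcomp Require Import all_classical all_reals all_analysis.
Set Implicit Arguments. Unset Strict Implicit. Unset Printing Implicit Defensive.
Import Order.TTheory GRing.Theory Num.Theory.
Import numFieldNormedType.Exports.
Local Open Scope classical_set_scope.
Local Open Scope ring_scope.

Section Defs.
Variables (R : realType) (d : nat).
Notation V := 'rV[R]_d.

Definition dotv (u v : V) : R := \sum_(i < d) u ord0 i * v ord0 i.
Definition enorm (u : V) : R := Num.sqrt (dotv u u).

Definition eball (c : V) (r : R) : set V := [set x | enorm (x - c) < r].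

Definition unit_sphere : set V := [set v | enorm v = 1].

Definition body (E : set V) : Prop := E !=set0 /\ closed E.

Definition bdry (A : set V) : set V := closure A `&` closure (~` A).

Definition hulloid (r : R) (E : set V) : set V :=
  \bigcap_(c in [set c | eball c r `&` E = set0]) ~` eball c r.

Definition convhull (A : set V) : set V :=
  [set x | exists n (w : 'I_n -> R) (p : 'I_n -> V),
     (forall i, 0 <= w i) /\ \sum_(i < n) w i = 1 /\ (forall i, A (p i)) /\
     x = \sum_(i < n) w i *: p i].

Definition ray_cone (A : set V) : set V :=
  [set y | exists lam x, 0 <= lam /\ A x /\ y = lam *: x].

Definition pointed (C : set V) : Prop := [set x | C x /\ C (- x)] = [set 0].

End Defs.

(* Main.v *)
Require Import Defs.
From HB Require Import structures.
From mathcomp Require Import all_boot all_order all_algebra.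
From mathcomp Require Import all_classical all_reals all_analysis.
From mathcomp Require Import lra ring.
Import Order.TTheory GRing.Theory Num.Theory.
Import numFieldNormedType.Exports.
Local Open Scope classical_set_scope.
Local Open Scope ring_scope.
Set Implicit Arguments. Unset Strict Implicit. Unset Printing Implicit Defensive.

Section Alg.
Variables (R : realType) (d : nat).
Notation V := 'rV[R]_d.
Implicit Types u v w : V.

Lemma dotvC u v : dotv u v = dotv v u.
Proof. by apply: eq_bigr => i _; rewrite mulrC. Qed.

Lemma dotvDl u w v : dotv (u + w) v = dotv u v + dotv w v.
Proof. by rewrite /dotv -big_split; apply: eq_bigr => i _; rewrite mxE mulrDl. Qed.

Lemma dotvZl (k : R) u v : dotv (k *: u) v = k * dotv u v.
Proof. by rewrite /dotv mulr_sumr; apply: eq_bigr => i _; rewrite mxE mulrA. Qed.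

Lemma dotvNl u v : dotv (- u) v = - dotv u v.
Proof. by rewrite -scaleN1r dotvZl mulN1r. Qed.

Lemma dotvBl u w v : dotv (u - w) v = dotv u v - dotv w v.
Proof. by rewrite dotvDl dotvNl. Qed.

Lemma dotv0l v : dotv 0 v = 0.
Proof. by rewrite /dotv big1 // => i _; rewrite mxE mul0r. Qed.

Lemma dotvDr u w v : dotv v (u + w) = dotv v u + dotv v w.
Proof. by rewrite dotvC dotvDl !(dotvC v). Qed.

Lemma dotvZr (k : R) u v : dotv v (k *: u) = k * dotv v u.
Proof. by rewrite dotvC dotvZl dotvC. Qed.

Lemma dotvNr u v : dotv v (- u) = - dotv v u.
Proof. by rewrite dotvC dotvNl dotvC. Qed.

Lemma dotvBr u w v : dotv v (u - w) = dotv v u - dotv v w.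
Proof. by rewrite dotvDr dotvNr. Qed.

Lemma dotv_suml (I : Type) (r : seq I) (P : pred I) (F : I -> V) v :
  dotv (\sum_(i <- r | P i) F i) v = \sum_(i <- r | P i) dotv (F i) v.
Proof.
elim/big_rec2: _ => [|i y1 y2 _ <-]; first exact: dotv0l.
by rewrite dotvDl.
Qed.

Lemma dotvv_ge0 v : 0 <= dotv v v.
Proof. by apply: sumr_ge0 => i _; rewrite -expr2 sqr_ge0. Qed.

Lemma dotvv_eq0 v : dotv v v = 0 -> v = 0.
Proof.
move=> /eqP; rewrite psumr_eq0; last by move=> i _; rewrite -expr2 sqr_ge0.
move=> /allP H; apply/rowP => i; rewrite mxE.
have := H i (mem_index_enum _); rewrite -expr2 sqrf_eq0 => /eqP.
by rewrite (ord1 ord0).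
Qed.

Lemma enorm_sq v : enorm v ^+ 2 = dotv v v.
Proof. by rewrite /enorm sqr_sqrtr // dotvv_ge0. Qed.

Lemma enorm_ge0 v : 0 <= enorm v.
Proof. exact: sqrtr_ge0. Qed.

Lemma enorm_lt v r : enorm v < r <-> (0 < r /\ dotv v v < r ^+ 2).
Proof.
split.
  move=> H; have r0 : 0 < r by apply: le_lt_trans H; exact: enorm_ge0.
  by split => //; rewrite -enorm_sq ltr_pXn2r // ?nnegrE ?enorm_ge0 ?ltW.
move=> [r0 H]; rewrite -(ltr_pXn2r (n:=2)) // ?nnegrE ?enorm_ge0 ?ltW //.
by rewrite enorm_sq.
Qed.

Lemma enorm_eq v r : 0 <= r -> (enorm v = r <-> dotv v v = r ^+ 2).
Proof.
move=> r0; split => [<-|H]; first by rewrite enorm_sq.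
by rewrite /enorm H sqrtr_sqr ger0_norm.
Qed.

Lemma cs_unit x v : dotv v v = 1 -> dotv x v ^+ 2 <= dotv x x.
Proof.
move=> v1; have := dotvv_ge0 (x - dotv x v *: v).
rewrite dotvBl !dotvBr !dotvZl !dotvZr v1 (dotvC v x).
by rewrite subr_ge0 => H; rewrite expr2; lra.
Qed.

End Alg.


Section Top.
Variables (R : realType) (d : nat).
Notation V := 'rV[R]_d.
Implicit Types u v w : V.

Lemma dot_cont_l y : continuous (fun x : V => dotv x y).
Proof.
rewrite /dotv.
apply: (@continuous_big _ _ +%R 0 xpredT _ _ _ _).
  exact: add_continuous.
move=> i _ x; apply: continuousM; first exact: coord_continuous.
exact: cst_continuous.
Qed.

Lemma dot_cont_sq : continuous (fun x : V => dotv x x).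
Proof.
rewrite /dotv.
apply: (@continuous_big _ _ +%R 0 xpredT _ _ _ _).
  exact: add_continuous.
by move=> i _ x; apply: continuousM; exact: coord_continuous.
Qed.

Lemma closed_dot_ge y (c : R) : closed [set x : V | c <= dotv x y].
Proof.
apply: (@preimage_closed _ _ (fun x : V => dotv x y) [set r | c <= r]).
  by move=> x _; apply: dot_cont_l.
exact: closed_ge.
Qed.

Lemma closed_sq_le (c : R) : closed [set x : V | dotv x x <= c].
Proof.
apply: (@preimage_closed _ _ (fun x : V => dotv x x) [set r | r <= c]).
  by move=> x _; apply: dot_cont_sq.
exact: closed_le.
Qed.

Lemma bounded_sq (A : set V) (c : R) : (forall x, A x -> dotv x x <= c) ->
  bounded_set A.
Proof.
move=> H; exists (1 + `|c|); split; first by rewrite num_real.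
move=> M HM x Ax.
have c0 : 0 <= dotv x x by exact: dotvv_ge0.
have Hc := H x Ax.
rewrite /=; change (mx_norm x <= M); rewrite mx_normrE; apply: bigmax_le => [|[i j] _ /=].
  have := normr_ge0 c; lra.
rewrite (ord1 i).
have : `|x ord0 j| ^+ 2 <= dotv x x.
  rewrite real_normK ?num_real // /dotv (bigD1 j) //= -expr2 lerDl.
  by apply: sumr_ge0 => k _; rewrite -expr2 sqr_ge0.
move=> Hj; apply: ltW; apply: le_lt_trans HM.
have n0 : 0 <= `|x ord0 j| by [].
have cabs : c <= `|c| by exact: ler_norm.
case: (lerP `|x ord0 j| 1) => h1; first by lra.
have : `|x ord0 j| <= `|x ord0 j| ^+ 2 by rewrite expr2 ler_peMl //; lra.
lra.
Qed.

End Top.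


Definition ext {T : Type} n (j : 'I_n.+1) (a : T) (f : 'I_n -> T) : 'I_n.+1 -> T :=
  fun i => if unlift j i is Some k then f k else a.

Lemma ext_j {T : Type} n (j : 'I_n.+1) (a : T) f : ext j a f j = a.
Proof. by rewrite /ext unlift_none. Qed.

Lemma ext_lift {T : Type} n (j : 'I_n.+1) (a : T) f k : ext j a f (lift j k) = f k.
Proof. by rewrite /ext liftK. Qed.

Lemma sum_split (W : zmodType) n (F : 'I_n.+1 -> W) j :
  \sum_(i < n.+1) F i = F j + \sum_(k < n) F (lift j k).
Proof. by rewrite (bigD1_ord j). Qed.

Section Cvx.
Variables (R : realType) (d : nat).
Notation V := 'rV[R]_d.
Implicit Types u v w : V.

Definition cvx (n : nat) (A : set V) : set V :=
  [set x | exists (w : 'I_n -> R) (p : 'I_n -> V),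
     (forall i, 0 <= w i) /\ \sum_(i < n) w i = 1 /\ (forall i, A (p i)) /\
     x = \sum_(i < n) w i *: p i].

Lemma convhullE (A : set V) x : convhull A x <-> exists n, cvx n A x.
Proof. by split => -[n H]; exists n. Qed.

Lemma cvx1 (A : set V) y : A y -> cvx 1 A y.
Proof.
move=> Ay; exists (fun _ => 1), (fun _ => y); split => //; split.
  by rewrite big_ord1.
by split => //; rewrite big_ord1 scale1r.
Qed.

Lemma cvx1_inv (A : set V) y : cvx 1 A y -> A y.
Proof.
move=> [w [p [w0 [w1 [Ap ->]]]]].
by move: w1; rewrite !big_ord1 => ->; rewrite scale1r.
Qed.

Lemma cvx_seg n (A : set V) z y (s : R) : cvx n A z -> A y -> 0 <= s <= 1 ->
  cvx n.+1 A ((1 - s) *: z + s *: y).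
Proof.
move=> [w [p [w0 [w1 [Ap ->]]]]] Ay /andP[s0 s1].
exists (ext ord_max s (fun k => (1 - s) * w k)), (ext ord_max y p).
split.
  move=> i; rewrite /ext; case: (unlift _ i) => [k|//].
  by apply: mulr_ge0 => //; rewrite subr_ge0.
split.
  by rewrite (sum_split _ ord_max) ext_j; under eq_bigr do rewrite ext_lift;
    rewrite -mulr_sumr w1 mulr1 addrC subrK.
split.
  by move=> i; rewrite /ext; case: (unlift _ i).
rewrite (sum_split _ ord_max) !ext_j addrC; congr (_ + _).
rewrite scaler_sumr; apply: eq_bigr => k _.
by rewrite !ext_lift scalerA.
Qed.

Lemma cvx_pad n (A : set V) z y : cvx n A z -> A y -> cvx n.+1 A z.
Proof.
move=> H Ay; have := cvx_seg H Ay (s := 0).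
by rewrite subr0 scale1r scale0r addr0 ler01 lexx; apply.
Qed.

Lemma cvx_dec n (A : set V) x : cvx n.+2 A x ->
  exists z y s, cvx n.+1 A z /\ A y /\ 0 <= s <= 1 /\ x = (1 - s) *: z + s *: y.
Proof.
move=> [w [p [w0 [w1 [Ap ->]]]]].
rewrite (sum_split _ ord_max) in w1.
rewrite (sum_split _ ord_max).
set s := w ord_max in w1 *.
have sum0 : 0 <= \sum_(k < n.+1) w (lift ord_max k) by apply: sumr_ge0.
have s1 : s <= 1 by lra.
have s0 : 0 <= s := w0 _.
case: (ltrP s 1) => hs.
  have hs' : 0 < 1 - s by lra.
  exists (\sum_(k < n.+1) (w (lift ord_max k) / (1 - s)) *: p (lift ord_max k)).
  exists (p ord_max), s.
  split.
    exists (fun k => w (lift ord_max k) / (1 - s)), (fun k => p (lift ord_max k)).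
    split; first by move=> k; apply: divr_ge0 => //; exact: ltW.
    split; last by [].
    have -> : \sum_(k < n.+1) w (lift ord_max k) / (1 - s) = (\sum_(k < n.+1) w (lift ord_max k)) / (1 - s) by rewrite -mulr_suml.
    have -> : \sum_(k < n.+1) w (lift ord_max k) = 1 - s by lra.
    by rewrite mulfV // gt_eqF.
  split => //; split; first by rewrite s0 s1.
  rewrite addrC scaler_sumr; congr (_ + _); apply: eq_bigr => k _.
  by rewrite scalerA mulrC divfK // gt_eqF.
have s_1 : s = 1 by apply/eqP; rewrite eq_le s1 hs.
have zero : forall k, w (lift ord_max k) = 0.
  move=> k; apply/eqP; rewrite eq_le w0 andbT.
  have : \sum_(k < n.+1) w (lift ord_max k) = 0 by lra.
  move/eqP; rewrite psumr_eq0 // => /allP /(_ k (mem_index_enum _)).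
  by rewrite implyTb => /eqP ->.
exists (p (lift ord_max ord0)), (p ord_max), 1.
split.
  exists (fun k => if k == ord0 then 1 else 0), (fun k => p (lift ord_max ord0)).
  split; first by move=> k; case: ifP.
  split; first by rewrite (bigD1 ord0) //= big1 ?addr0 // => k /negbTE ->.
  split => //.
  by rewrite (bigD1 ord0) //= big1 ?addr0 ?scale1r // => k /negbTE ->; rewrite scale0r.
split => //; split; first by rewrite ler01 lexx.
rewrite subrr scale0r add0r scale1r big1 ?addr0; first by rewrite s_1 scale1r.
move=> k _.
by rewrite zero scale0r.
Qed.

End Cvx.


Section Cpt.
Variables (R : realType) (d : nat).
Notation V := 'rV[R]_d.

Definition segf (q : V * (V * R)) : V := (1 - q.2.2) *: q.1 + q.2.2 *: q.2.1.

Lemma segf_cont : continuous segf.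
Proof.
move=> q; rewrite /segf.
have c1 : {for q, continuous (fun q : V * (V * R) => q.1)} by exact: cvg_fst.
have c2 : {for q, continuous (fun q : V * (V * R) => q.2)} by exact: cvg_snd.
have c21 : {for q, continuous (fun q : V * (V * R) => q.2.1)}.
  by apply: (continuous_comp c2); exact: cvg_fst.
have c22 : {for q, continuous (fun q : V * (V * R) => q.2.2)}.
  by apply: (continuous_comp c2); exact: cvg_snd.
apply: cvgD; apply: cvgZ => //.
apply: cvgB => //; exact: cvg_cst.
Qed.

Lemma cvx_compact n (G : set V) : compact G -> compact (cvx n.+1 G).
Proof.
move=> cG; elim: n => [|n IH].
  have -> : cvx 1 G = G.
    by apply/seteqP; split => x; [exact: cvx1_inv | exact: cvx1].
  exact: cG.
have -> : cvx n.+2 G = segf @` (cvx n.+1 G `*` (G `*` `[0, 1]%classic)).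
  apply/seteqP; split => x.
    move=> /cvx_dec[z [y [s [Hz [Hy [Hs ->]]]]]].
    exists (z, (y, s)) => //; split => //; split => //=.
  move=> [[z [y s]] [/= Hz [/= Hy]]]; rewrite /= in_itv /= => Hs <-.
  exact: cvx_seg.
apply: continuous_compact; first exact: continuous_subspaceT segf_cont.
by apply: compact_setX => //; apply: compact_setX => //; exact: segment_compact.
Qed.

End Cpt.


Section Carath.
Variables (R : realType) (d : nat).
Notation V := 'rV[R]_d.

Lemma affine_dep m (p : 'I_m.+1 -> V) : (d.+1 < m.+1)%N ->
  exists mu : 'I_m.+1 -> R, (exists i, 0 < mu i) /\ \sum_i mu i = 0 /\
     \sum_i mu i *: p i = 0.
Proof.
move=> hm.
pose P : 'M[R]_(m.+1, d) := \matrix_(i, j) p i ord0 j.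
pose M := row_mx (const_mx 1 : 'M[R]_(m.+1, 1)) P.
have nf : ~~ row_free M.
  rewrite /row_free; apply/negP => /eqP hr.
  have := rank_leq_col M; rewrite hr; move: hm; rewrite add1n.
  by move=> /leq_trans H /H; rewrite ltnn.
have [u [u0 uM]] : exists u : 'rV[R]_m.+1, u != 0 /\ u *m M = 0.
  apply: contrapT => H; apply: (negP nf); apply: inj_row_free => v vM.
  by apply: contrapT => vn0; apply: H; exists v; split => //; apply/eqP.
move: uM; rewrite mul_mx_row => /eqP; rewrite row_mx_eq0 => /andP[/eqP h1 /eqP h2].
have s0 : \sum_i u ord0 i = 0.
  transitivity ((u *m const_mx 1 : 'M[R]_(1,1)) ord0 ord0); last by rewrite h1 mxE.
  by rewrite mxE; apply: eq_bigr => i _; rewrite mxE mulr1.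
have s1 : \sum_i u ord0 i *: p i = 0.
  apply/rowP => j; rewrite summxE mxE.
  transitivity ((u *m P) ord0 j); last by rewrite h2 mxE.
  by rewrite mxE; apply: eq_bigr => i _; rewrite !mxE.
exists (fun i => u ord0 i); split => //.
apply: contrapT => hn.
have hle : forall i, u ord0 i <= 0.
  by move=> i; rewrite leNgt; apply/negP => hi; apply: hn; exists i.
have : \sum_i - u ord0 i = 0 by rewrite sumrN s0 oppr0.
move/eqP; rewrite psumr_eq0; last by move=> i _; rewrite oppr_ge0.
move=> /allP hall; apply: (negP u0); apply/eqP/rowP => i.
rewrite mxE; have := hall i (mem_index_enum _).
by rewrite oppr_eq0 => /eqP.
Qed.

Lemma carath n (A : set V) x : (d.+1 < n)%N -> cvx n A x -> cvx n.-1 A x.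
Proof.
case: n => [//|m] hm [w [p [w0 [w1 [Ap ->]]]]] /=.
have [mu [[i0 hi0] [smu spmu]]] := affine_dep p hm.
case: (@arg_minP _ _ _ i0 (fun i => 0 < mu i) (fun i => w i / mu i) hi0)
  => j hj hmin.
set t := w j / mu j.
have t0 : 0 <= t by apply: divr_ge0 => //; exact: ltW.
pose w' i := w i - t * mu i.
have w'0 : forall i, 0 <= w' i.
  move=> i; rewrite /w' subr_ge0.
  case: (ltrP 0 (mu i)) => hi.
    by rewrite -ler_pdivlMr //; exact: (hmin i hi).
  apply: le_trans (w0 i); rewrite mulr_ge0_le0 //.
have w'j : w' j = 0 by rewrite /w' /t divfK ?subrr // gt_eqF.
have sw' : \sum_i w' i = 1.
  by rewrite /w' sumrB -mulr_sumr smu mulr0 subr0.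
have sw'p : \sum_i w' i *: p i = \sum_i w i *: p i.
  under eq_bigr do rewrite /w' scalerBl -scalerA.
  by rewrite sumrB -scaler_sumr spmu scaler0 subr0.
rewrite -sw'p; exists (fun k => w' (lift j k)), (fun k => p (lift j k)).
split => //; split.
  by rewrite -sw' (sum_split _ j) w'j add0r.
split => //.
by rewrite (sum_split _ j) w'j scale0r add0r.
Qed.

Lemma carath_all (A : set V) x : convhull A x ->
  exists n, (n <= d.+1)%N /\ cvx n A x.
Proof.
move=> [n0 H0].
suff: forall N n, (n <= N)%N -> cvx n A x -> exists n, (n <= d.+1)%N /\ cvx n A x.
  by move=> /(_ n0 n0 (leqnn n0) H0).
elim=> [|N IH] n hn H.
  by exists n; split => //; move: hn; rewrite leqn0 => /eqP ->.
case: (leqP n d.+1) => hnd; first by exists n.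
have := carath hnd H; apply: IH.
by rewrite -ltnS (ltn_predK hnd).
Qed.

End Carath.


Section Gordan.
Variables (R : realType) (d : nat).
Notation V := 'rV[R]_d.

Lemma cvx_up (G : set V) y0 n m x : G y0 -> (n <= m)%N -> cvx n G x -> cvx m G x.
Proof.
move=> Gy0 /subnK <-; elim: (m - n)%N => [//|k IH] H.
by rewrite addSn; apply: cvx_pad (IH H) Gy0.
Qed.

Lemma quad_lemma (zz zu uu : R) : 0 <= uu -> (uu = 0 -> zu = 0) ->
  (forall s, 0 < s <= 1 -> zz <= zz + 2 * s * zu + s ^+ 2 * uu) -> 0 <= zu.
Proof.
move=> uu0 uu0z H; rewrite leNgt; apply/negP => hzu.
case: (ltrP 0 uu) => hu; last first.
  have : uu = 0 by apply/eqP; rewrite eq_le hu uu0.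
  by move/uu0z => e; move: hzu; rewrite e ltxx.
case: (lerP (- zu) uu) => h.
  set s := - zu / uu.
  have s0 : 0 < s by apply: divr_gt0 => //; lra.
  have s1 : s <= 1 by rewrite ler_pdivrMr // mul1r.
  have hs : s * uu = - zu by rewrite /s divfK // gt_eqF.
  have := H s; rewrite s0 s1 /= => /(_ isT).
  have -> : s ^+ 2 * uu = s * (s * uu) by rewrite expr2 mulrA.
  rewrite hs; nra.
have := H 1; rewrite ltr01 lexx /= => /(_ isT); rewrite expr1n; lra.
Qed.

Lemma gordan (G : set V) : compact G -> G !=set0 -> ~ convhull G 0 ->
  exists v, forall y, G y -> dotv y v < 0.
Proof.
move=> cG [y0 Gy0] n0.
pose K := cvx d.+1 G.
have cK : compact K by exact: cvx_compact.
have hK : forall x, convhull G x -> K x.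
  move=> x /carath_all [n [hn Hn]]; exact: cvx_up Gy0 hn Hn.
have Kh : forall x, K x -> convhull G x by move=> x Kx; exists d.+1.
have K0 : K !=set0 by exists y0; apply: hK; exists 1%N; exact: cvx1.
have [z zK zmin] := compact_EVT_min K0 cK
  (continuous_subspaceT (@dot_cont_sq R d)).
have zK' : K z by rewrite inE in zK.
have zn0 : z != 0 by apply/negP => /eqP ez; apply: n0; rewrite -ez; exact: Kh.
have zz0 : 0 < dotv z z.
  rewrite lt_def dotvv_ge0 andbT; apply/negP => /eqP h.
  by move: zn0; rewrite (dotvv_eq0 h) eqxx.
exists (- z) => y Gy.
rewrite dotvNr dotvC oppr_lt0.
suff : 0 <= dotv z (y - z) by rewrite dotvBr; lra.
have Hseg : forall s, 0 < s <= 1 -> K (z + s *: (y - z)).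
  move=> s /andP[s0 s1].
  have hs : 0 <= s <= 1 by rewrite s1 ltW.
  have := cvx_seg zK' Gy hs.
  have -> : (1 - s) *: z + s *: y = z + s *: (y - z).
    by rewrite scalerBl scale1r scalerBr -addrA [X in _ = _ + X]addrC.
  by move=> Hc; apply: hK; exists d.+2.
move: Hseg; move: (y - z) => u Hseg.
apply: (@quad_lemma (dotv z z) _ (dotv u u)).
- exact: dotvv_ge0.
- by move/dotvv_eq0 => ->; rewrite /dotv big1 // => i _; rewrite mxE mulr0.
move=> s hs; have := Hseg s hs.
move=> /(mem_set) /zmin.
rewrite !(dotvDl, dotvDr, dotvZl, dotvZr) (dotvC u z).
move=> h; apply: le_trans h _; rewrite expr2; lra.
Qed.

End Gordan.


Section Cone.
Variables (R : realType) (d : nat).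
Notation V := 'rV[R]_d.

Lemma cone_comb (A : set V) x0 n (lam : 'I_n -> R) (q : 'I_n -> V) :
  A x0 -> (forall i, 0 <= lam i) -> (forall i, A (q i)) ->
  convhull (ray_cone A) (\sum_i lam i *: q i).
Proof.
move=> Ax0; case: n lam q => [|m] lam q lam0 Aq.
  exists 1%N, (fun _ => 1), (fun _ => 0 *: x0); split => //; split.
    by rewrite big_ord1.
  split; first by move=> i; exists 0, x0; split.
  by rewrite big_ord0 big_ord1 !scale0r scaler0.
exists m.+1, (fun _ => (m.+1%:R)^-1), (fun i => (m.+1%:R * lam i) *: q i).
split; first by move=> i; rewrite invr_ge0 ler0n.
split.
  by rewrite sumr_const card_ord -[_ *+ _]mulr_natr mulVf // pnatr_eq0.
split; first by move=> i; exists (m.+1%:R * lam i), (q i); split => //;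
  apply: mulr_ge0 => //; rewrite ler0n.
apply: eq_bigr => i _; rewrite scalerA mulrA mulVf ?mul1r // pnatr_eq0.
Qed.

Lemma closed_sq_ge (c : R) : closed [set x : V | c <= dotv x x].
Proof.
apply: (@preimage_closed _ _ (fun x : V => dotv x x) [set r | c <= r]).
  by move=> x _; apply: dot_cont_sq.
exact: closed_ge.
Qed.

Lemma enorm0 : enorm (0 : V) = 0.
Proof. by rewrite /enorm /dotv big1 ?sqrtr0 // => i _; rewrite mxE mul0r. Qed.

End Cone.


Section PartI.
Variables (R : realType) (d : nat).
Notation V := 'rV[R]_d.

Lemma part_i (Rad : R) (E : set V) (a : V) : 0 < Rad -> closed E ->
  enorm a = Rad ->
  let FF := E `&` [set x | enorm x = Rad] in
  let C := convhull (ray_cone FF) in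
  pointed C -> ~ C a ->
  exists v, unit_sphere v /\ 0 < dotv a v /\ (forall x, FF x -> dotv x v < 0).
Proof.
move=> R0 cE ha FF C hp hCa.
have FFe : FF = E `&` ([set x | dotv x x <= Rad ^+ 2] `&` [set x | Rad ^+ 2 <= dotv x x]).
  apply/seteqP; split => x [Ex Hx]; split => //.
    by move: Hx => /= /(enorm_eq x (ltW R0)) ->; rewrite lexx.
  by apply/(enorm_eq x (ltW R0)); apply/eqP; rewrite eq_le; case: Hx => /= -> ->.
have cFF : compact FF.
  apply: bounded_closed_compact.
    by apply: (@bounded_sq _ _ _ (Rad ^+ 2)) => x; rewrite FFe => -[_ []].
  by rewrite FFe; apply: closedI => //; apply: closedI;
    [exact: closed_sq_le | exact: closed_sq_ge].
have [x0 FFx0] : exists x0, FF x0.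
  have : [set x | C x /\ C (- x)] 0 by rewrite hp.
  move=> [[n [w [p [w0 [w1 [Ap _]]]]]] _].
  case: n w p w0 w1 Ap => [|m] w p w0 w1 Ap.
    by move: w1; rewrite big_ord0 => /eqP; rewrite eq_sym oner_eq0.
  by have [lam [x [_ [FFx _]]]] := Ap ord0; exists x.
have FFn0 : forall x, FF x -> x != 0.
  move=> x [_ /= hx]; apply/negP => /eqP ex; move: hx; rewrite ex enorm0.
  by move=> e; move: R0; rewrite -e ltxx.
pose G := FF `|` [set - a].
have cG : compact G by apply: compactU => //; exact: compact_set1.
have nG : ~ convhull G 0.
  move=> [n [w [p [w0 [w1 [Gp e0]]]]]].
  pose lam i := if p i == - a then 0 else w i.
  pose q i := if p i == - a then x0 else p i.
  pose s := \sum_i (if p i == - a then w i else 0).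
  have lam0 i : 0 <= lam i by rewrite /lam; case: ifP.
  have FFq i : FF (q i).
    rewrite /q; case: ifPn => // /eqP hpi.
    by case: (Gp i) => // /= /hpi.
  have hsum : \sum_i lam i *: q i = s *: a.
    have : \sum_i w i *: p i = \sum_i lam i *: q i - s *: a.
      rewrite /s scaler_suml -sumrB; apply: eq_bigr => i _.
      rewrite /lam /q; case: ifPn => [/eqP ->|_].
        by rewrite scale0r add0r scalerN.
      by rewrite scale0r subr0.
    by rewrite -e0 => /eqP; rewrite eq_sym subr_eq0 => /eqP.
  have hsl : \sum_i lam i + s = 1.
    rewrite -w1 /s -big_split; apply: eq_bigr => i _.
    by rewrite /lam /=; case: (p i == - a); rewrite ?add0r ?addr0.
  have s0 : 0 <= s by apply: sumr_ge0 => i _; case: ifP.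
  case: (ltrP 0 s) => hs.
    apply: hCa.
    have -> : a = \sum_i (lam i / s) *: q i.
      have : s^-1 *: (s *: a) = a by rewrite scalerA mulVf ?scale1r // gt_eqF.
      move=> <-; rewrite -hsum scaler_sumr; apply: eq_bigr => i _.
      by rewrite scalerA mulrC.
    by apply: (@cone_comb _ _ FF x0) => // i; apply: divr_ge0 => //; exact: ltW.
  have s_0 : s = 0 by apply/eqP; rewrite eq_le hs s0.
  rewrite s_0 scale0r in hsum; rewrite s_0 addr0 in hsl.
  have [j hj] : exists j, 0 < lam j.
    apply: contrapT => hn.
    have : \sum_i lam i <= 0.
      apply: sumr_le0 => i _; rewrite leNgt; apply/negP => hi; apply: hn.
      by exists i.
    by rewrite hsl; lra.
  pose y := lam j *: q j.
  have Cy : C y.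
    have -> : y = \sum_(i < n) (if i == j then lam i else 0) *: q i.
      rewrite (bigD1 j) //= eqxx big1 ?addr0 // => i /negbTE ->.
      by rewrite scale0r.
    by apply: (@cone_comb _ _ FF x0) => // i; case: ifP.
  have Cny : C (- y).
    have -> : - y = \sum_(i < n) (if i == j then 0 else lam i) *: q i.
      move: hsum; rewrite (bigD1 j) //= => /eqP; rewrite addr_eq0 => /eqP; rewrite /y => ->.
      rewrite opprK [RHS](bigD1 j) //= eqxx scale0r add0r.
      by apply: eq_bigr => i /negbTE ->.
    by apply: (@cone_comb _ _ FF x0) => // i; case: ifP.
  have : [set x | C x /\ C (- x)] y by split.
  rewrite hp /= => /eqP; rewrite scaler_eq0 (gt_eqF hj) /=.
  by move/negP: (FFn0 _ (FFq j)).
have [v0 hv0] := gordan cG (ex_intro _ (- a) (or_intror erefl)) nG.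
have hav0 : 0 < dotv a v0.
  by have := hv0 (- a) (or_intror erefl); rewrite dotvNl oppr_lt0.
have vv0 : 0 < dotv v0 v0.
  rewrite lt_def dotvv_ge0 andbT; apply/negP => /eqP h.
  by move: hav0; rewrite (dotvv_eq0 h) dotvC /dotv big1 ?ltxx // => i _;
    rewrite mxE mul0r.
pose k := (Num.sqrt (dotv v0 v0))^-1.
have k0 : 0 < k by rewrite invr_gt0 sqrtr_gt0.
exists (k *: v0); split; last split.
- rewrite /unit_sphere /=; apply/(enorm_eq _ ler01).
  rewrite dotvZl dotvZr mulrA -expr2 exprVn sqr_sqrtr ?(ltW vv0) //.
  by rewrite mulVf ?expr1n // gt_eqF.
- by rewrite dotvZr mulr_gt0.
move=> x FFx; rewrite dotvZr pmulr_rlt0 //.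
by apply: hv0; left.
Qed.

End PartI.


Section PartII.
Variables (R : realType) (d : nat).
Notation V := 'rV[R]_d.

Lemma sq_le_le (x y : R) : 0 <= y -> x ^+ 2 <= y ^+ 2 -> x <= y.
Proof. move=> y0 h; rewrite leNgt; apply/negP => hx; move: h; rewrite !expr2; nra. Qed.

Lemma part_ii (Rad : R) (E : set V) (a v : V) : 0 < Rad -> closed E ->
  enorm a = Rad -> (forall x, E x -> Rad ^+ 2 <= dotv x x) ->
  unit_sphere v -> 0 < dotv a v ->
  (forall x, (E `&` [set x | enorm x = Rad]) x -> dotv x v < 0) ->
  exists t0 : R, 0 < t0 /\ forall t : R, 0 < t < t0 ->
    eball (t *: v) Rad a /\ eball (t *: v) Rad `&` E = set0.
Proof.
move=> R0 cE ha Eout hv av0 hFF.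
have vv : dotv v v = 1 by move: hv => /(enorm_eq v ler01); rewrite expr1n.
have aa : dotv a a = Rad ^+ 2 by apply/(enorm_eq a (ltW R0)).
pose K := E `&` ([set x | 0 <= dotv x v] `&` [set x | dotv x x <= (Rad + 1) ^+ 2]).
have cK : compact K.
  apply: bounded_closed_compact.
    by apply: (@bounded_sq _ _ _ ((Rad + 1) ^+ 2)) => x [_ []].
  apply: closedI => //; apply: closedI; [exact: closed_dot_ge | exact: closed_sq_le].
have [mm [mm0 Hmm]] : exists mm, 0 < mm /\ forall x, K x -> Rad ^+ 2 + mm <= dotv x x.
  case: (pselect (K !=set0)) => [K0|K0]; last first.
    by exists 1; split => // x Kx; exfalso; apply: K0; exists x.
  have [z zK zmin] := compact_EVT_min K0 cK
    (continuous_subspaceT (@dot_cont_sq R d)).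
  have zK' : K z by rewrite inE in zK.
  exists (dotv z z - Rad ^+ 2); split; last first.
    by move=> x Kx; rewrite addrC subrK; apply: zmin; rewrite inE.
  case: zK' => Ez [/= zv _].
  rewrite subr_gt0 lt_def Eout // andbT; apply/negP => /eqP ez.
  have : dotv z v < 0 by apply: hFF; split => //=; apply/(enorm_eq z (ltW R0)).
  by rewrite ltNge zv.
pose al := dotv a v.
pose t0 := Num.min 1 (Num.min (mm / (2 * (Rad + 1))) (2 * al)).
have t00 : 0 < t0.
  have al0 : 0 < al := av0.
  rewrite /t0 !lt_min ltr01 /=; apply/andP; split.
    by apply: divr_gt0 => //; lra.
  lra.
exists t0; split => // t /andP[t0' tt0].
move: tt0; rewrite /t0 !lt_min => /andP[t1 /andP[tm ta]].
have tm' : t * (2 * (Rad + 1)) < mm by rewrite -ltr_pdivlMr //; lra.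
split.
  apply/(enorm_lt _ Rad); split => //.
  rewrite dotvBl !dotvBr !dotvZl !dotvZr vv aa (dotvC v a) -/al.
  have : t * t < t * (2 * al) by rewrite ltr_pM2l.
  rewrite expr2; lra.
apply/seteqP; split => x // [/(enorm_lt _ Rad) [_ hx] Ex].
move: hx; rewrite dotvBl !dotvBr !dotvZl !dotvZr vv (dotvC v x) => hx.
have xx := Eout x Ex.
have tt : 0 <= t * t by rewrite mulr_ge0 // ltW.
case: (lerP (dotv x v) 0) => hxv.
  have : t * dotv x v <= 0 by rewrite mulr_ge0_le0 // ltW.
  move: hx; rewrite expr2 /=; lra.
have cs := cs_unit x vv.
case: (lerP (dotv x x) ((Rad + 1) ^+ 2)) => hxx.
  have Kx : K x by split => //; split => //=; exact: ltW.
  have := Hmm x Kx.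
  have hxv' : dotv x v <= Rad + 1 by apply: sq_le_le; [lra | apply: le_trans cs hxx].
  have : t * dotv x v <= t * (Rad + 1) by rewrite ler_pM2l.
  move: hx; rewrite expr2 /=; lra.
pose r := enorm x.
have r0 : 0 <= r := enorm_ge0 x.
have rr : r ^+ 2 = dotv x x := enorm_sq x.
have hr : Rad + 1 < r.
  rewrite ltNge; apply/negP => hr; move: hxx; rewrite -rr.
  have : r ^+ 2 <= (Rad + 1) ^+ 2 by rewrite !expr2; nra.
  lra.
have hxvr : dotv x v <= r by apply: sq_le_le => //; rewrite rr.
have : t * dotv x v <= t * r by rewrite ler_pM2l.
have : Rad * Rad < (r - t) * (r - t) by nra.
move: hx rr; rewrite !expr2 /=; lra.
Qed.

End PartII.

Theorem mainTheorem3 (R : realType) (d : nat) (Rad : R) (E : set 'rV[R]_d)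
    (a : 'rV[R]_d) :
  0 < Rad -> body E ->
  bdry (hulloid Rad E) a ->
  (* B = B(o,Rad) R-supports co_R(E) at a *)
  enorm a = Rad -> eball 0 Rad `&` hulloid Rad E = set0 ->
  let FF := E `&` [set x | enorm x = Rad] in
  let C := convhull (ray_cone FF) in
  pointed C -> ~ C a ->
  let P := fun v => unit_sphere v /\ 0 < dotv a v /\ (forall x, FF x -> dotv x v < 0) in
  (exists v, P v) /\
  (forall v, P v -> exists t0 : R, 0 < t0 /\
     forall t : R, 0 < t < t0 ->
       eball (t *: v) Rad a /\ eball (t *: v) Rad `&` E = set0).
Proof.
move=> R0 [En cE] _ ha hB FF C hp hCa P.
have Eout : forall x, E x -> Rad ^+ 2 <= dotv x x.
  move=> x Ex; rewrite leNgt; apply/negP => hx.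
  have : (eball 0 Rad `&` hulloid Rad E) x.
    split.
      by apply/(enorm_lt _ Rad); rewrite subr0; split.
    move=> c /= hc hxc.
    have : (eball c Rad `&` E) x by split.
    by rewrite hc.
  by rewrite hB.
split.
  exact: (part_i R0 cE ha hp hCa).
move=> v [hv [av hx]]; exact: (part_ii R0 cE ha Eout hv av hx).
Qed.
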